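(* Let $C$ be a weakly compact convex subset of a Banach space $X$ and let $T:C\to C$ be an orbitally Kannan mapping which diminishes the radius of orbits. Then the following are equivalent: (1) $T$ has a unique fixed point; (2) $\inf\{r_x(O_T(x)):x\in C\}=0$; (3) for every $x\in C$ with $r_x(O_T(x))>0$ there exists $y\in C$ with $r_x(O_T(x))>r_y(O_T(y))$.
   Context: For $x\in X$ and $A\subseteq X$, $r_x(A)=\sup\{\|x-y\|:y\in A\}$; $O_T(x)=\{x,Tx,T^2x,\dots\}$. $T$ is orbitally Kannan if $\|Tx-Ty\|\le\frac12\big(r_x(O_T(x))+r_y(O_T(y))\big)$ for all $x,y\in C$. $T$ diminishes the radius of orbits if $r_{Tx}(O_T(Tx))\le r_x(O_T(x))$ for all $x\in C$. *)

(* Defs.v *)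
From HB Require Import structures.
From mathcomp Require Import all_boot all_order all_algebra.
From mathcomp Require Import all_classical all_reals all_analysis.
Set Implicit Arguments. Unset Strict Implicit. Unset Printing Implicit Defensive.
Import Order.TTheory GRing.Theory Num.Theory.
Import numFieldNormedType.Exports.
Local Open Scope classical_set_scope.
Local Open Scope ring_scope.

Definition dual_index (R : realType) (X : normedModType R) :=
  {f : X -> R | (forall (a : R) (u v : X), f (a *: u + v) = a * f u + f v)
                /\ continuous f}.

Definition weak_space (R : realType) (X : normedModType R) : topologicalType :=
  sup_topology (fun i : dual_index X =>
    Topological.on (initial_topology (proj1_sig i))).

Definition weakly_compact (R : realType) (X : normedModType R) (C : set X) :=
  @compact (weak_space X) C.

Definition convex_in (R : realType) (X : normedModType R) (C : set X) :=
  forall x y, C x -> C y -> forall l : R, 0 <= l -> l <= 1 ->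
    C (l *: x + (1 - l) *: y).

Definition orbitT (X : Type) (T : X -> X) (x : X) : set X :=
  [set iter n T x | n in [set: nat]].

Definition orb_radius (R : realType) (X : normedModType R) (x : X) (A : set X)
  : \bar R := ereal_sup [set (`|x - y|)%:E | y in A].

Definition orbitally_kannan (R : realType) (X : normedModType R)
  (C : set X) (T : X -> X) :=
  forall x y, C x -> C y ->
    ((`|T x - T y|)%:E <= (2%:R^-1)%:E * (orb_radius x (orbitT T x) + orb_radius y (orbitT T y)))%E.

Definition diminishes_orbit_radius (R : realType) (X : normedModType R)
  (C : set X) (T : X -> X) :=
  forall x, C x -> (orb_radius (T x) (orbitT T (T x)) <= orb_radius x (orbitT T x))%E.

Definition has_unique_fixed_point (X : Type) (C : set X) (T : X -> X) :=
  exists! x : X, C x /\ T x = x.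

(* Main.v *)
Require Import Defs.
From HB Require Import structures.
From mathcomp Require Import all_boot all_order all_algebra.
From mathcomp Require Import all_classical all_reals all_analysis.
From mathcomp Require Import ring lra.
Set Implicit Arguments. Unset Strict Implicit. Unset Printing Implicit Defensive.
Import Order.TTheory GRing.Theory Num.Theory.
Import numFieldNormedType.Exports.
Local Open Scope classical_set_scope.
Local Open Scope ring_scope.

Lemma infP_le (R : realType) (I : Type) (A : set I) (F : I -> R) b i :
  (forall j, A j -> b <= F j) -> A i -> inf (F @` A) <= F i.
Proof.
move=> hb Ai; apply: ge_inf; last by exists i.
by exists b => _ [j Aj <-]; exact: hb.
Qed.

Lemma infP_ge (R : realType) (I : Type) (A : set I) (F : I -> R) c :
  A !=set0 -> (forall j, A j -> c <= F j) -> c <= inf (F @` A).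
Proof.
move=> [i Ai] hc; apply: lb_le_inf; first by exists (F i), i.
by move=> _ [j Aj <-]; exact: hc.
Qed.
Section HBsec.
Variables (R : realType) (X : lmodType R).

Definition sublin (q : X -> R) :=
  (forall x y, q (x + y) <= q x + q y) /\ (forall a x, 0 <= a -> q (a *: x) <= a * q x).

Lemma sublin0 q : sublin q -> q 0 = 0.
Proof.
move=> [sa sh]; apply/eqP; rewrite eq_le; apply/andP; split.
  by have := sh 0 0 (lexx _); rewrite scale0r mul0r.
by have := sa 0 0; rewrite addr0 -{1}(addr0 (q 0)) lerD2l.
Qed.

Lemma sublin_hom q a x : sublin q -> 0 <= a -> q (a *: x) = a * q x.
Proof.
move=> sq; rewrite le0r => /orP[/eqP->|a0].
  by rewrite scale0r mul0r sublin0.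
apply/eqP; rewrite eq_le (sq.2 _ _ (ltW a0)) /=.
have := sq.2 a^-1 (a *: x); rewrite scalerA mulVf ?gt_eqF // scale1r.
have ia0 : 0 <= a^-1 by rewrite invr_ge0 ltW.
move=> /(_ ia0).
by rewrite -(ler_pM2l a0) mulrA mulfV ?gt_eqF // mul1r.
Qed.

Lemma sublin_neg q x : sublin q -> - q (- x) <= q x.
Proof.
move=> sq; have := sq.1 x (- x); rewrite subrr sublin0 //.
move=> h; rewrite lerNl; rewrite -lerBlDl sub0r in h; exact: h.
Qed.


Section Zorn_HB.
Variable p : X -> R.
Hypothesis sp : sublin p.

Let Tq := {q : X -> R | sublin q /\ forall x, q x <= p x}.
Let Rq (s t : Tq) : bool := `[< forall x, sval t x <= sval s x >].

Let lbq (s : Tq) x : - p (- x) <= sval s x.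
Proof.
apply: le_trans (sublin_neg _ (proj1 (svalP s))).
by rewrite lerN2; exact: (proj2 (svalP s)).
Qed.

Let chain_lb (A : set Tq) : total_on A Rq -> exists t, forall s, A s -> Rq s t.
Proof.
move=> tot; have [->|/set0P[s0 As0]] := eqVneq A set0.
  by exists (exist _ p (conj sp (fun x => lexx _))).
pose g x := inf [set sval s x | s in A].
have gle s x : A s -> g x <= sval s x.
  by move=> As; apply: (@infP_le _ _ _ _ (- p (- x))) => // j _; exact: lbq.
have gge c x : (forall s, A s -> c <= sval s x) -> c <= g x.
  by move=> h; apply: infP_ge => //; exists s0.
have sg : sublin g.
  split.
    move=> x y.
    have key s1 s2 : A s1 -> A s2 -> g (x + y) <= sval s1 x + sval s2 y.
      move=> A1 A2; have [/asboolP h|/asboolP h] := tot _ _ A1 A2.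
      - apply: le_trans (gle _ _ A2) _; apply: le_trans ((proj1 (svalP s2)).1 _ _) _.
        by rewrite lerD2r h.
      - apply: le_trans (gle _ _ A1) _; apply: le_trans ((proj1 (svalP s1)).1 _ _) _.
        by rewrite lerD2l h.
    rewrite -lerBlDl; apply: (gge) => s2 A2; rewrite lerBlDl -lerBlDr.
    by apply: (gge) => s1 A1; rewrite lerBlDr; exact: key.
  move=> a x; rewrite le0r => /orP[/eqP->|a0].
    rewrite scale0r mul0r; apply: le_trans (gle _ _ As0) _.
    by rewrite sublin0 //; exact: (proj1 (svalP s0)).
  rewrite -ler_pdivrMl //; apply: (gge) => s As; rewrite ler_pdivrMl //.
  exact: le_trans (gle _ _ As) ((proj1 (svalP s)).2 _ _ (ltW a0)).
have gp x : g x <= p x.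
  exact: le_trans (gle _ _ As0) ((proj2 (svalP s0)) x).
exists (exist _ g (conj sg gp)) => s As; apply/asboolP => x /=; exact: gle.
Qed.

Definition shiftq (q : X -> R) (y : X) (x : X) :=
  inf [set q (x + t *: y) - t * q y | t in [set t : R | 0 <= t]].

Lemma shift_sublin (q : X -> R) y : sublin q ->
  [/\ sublin (shiftq q y), forall x, shiftq q y x <= q x & shiftq q y (- y) <= - q y].
Proof.
move=> sq.
pose q' := shiftq q y.
have lb x t : 0 <= t -> - q (- x) <= q (x + t *: y) - t * q y.
  move=> t0; rewrite lerBrDr -sublin_hom //.
  by have := sq.1 (x + t *: y) (- x); rewrite addrC addKr; lra.
have gle x t : 0 <= t -> q' x <= q (x + t *: y) - t * q y.
  by move=> t0; apply: (@infP_le _ _ _ _ (- q (- x))) => // j; exact: lb.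
have gge c x : (forall t, 0 <= t -> c <= q (x + t *: y) - t * q y) -> c <= q' x.
  by move=> h; apply: infP_ge => //; exists 0; rewrite /= lexx.
split.
- split.
    move=> x1 x2; rewrite -lerBlDl; apply: (gge) => t2 t20; rewrite lerBlDl -lerBlDr.
    apply: (gge) => t1 t10; rewrite lerBlDr.
    apply: le_trans (gle _ (t1 + t2) (addr_ge0 t10 t20)) _.
    rewrite scalerDl mulrDl.
    have := sq.1 (x1 + t1 *: y) (x2 + t2 *: y).
    have -> : x1 + t1 *: y + (x2 + t2 *: y) = x1 + x2 + (t1 *: y + t2 *: y).
      by rewrite addrACA.
    move=> h; apply: le_trans (lerB h (lexx _)) _.
    by rewrite opprD addrACA.
  move=> a x; rewrite le0r => /orP[/eqP->|a0].
    rewrite scale0r mul0r; apply: le_trans (gle _ 0 (lexx _)) _.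
    by rewrite scale0r addr0 mul0r subr0 sublin0.
  rewrite -ler_pdivrMl //; apply: (gge) => t t0; rewrite ler_pdivrMl //.
  apply: le_trans (gle _ (a * t) (mulr_ge0 (ltW a0) t0)) _.
  rewrite -scalerA -scalerDr mulrBr mulrA lerB // sq.2 // ltW //.
- move=> x.
  by apply: le_trans (gle _ 0 (lexx _)) _; rewrite scale0r addr0 mul0r subr0.
- apply: le_trans (gle _ 1 ler01) _.
  by rewrite scale1r addNr sublin0 // mul1r sub0r.
Qed.

Lemma minimal_linear (q : X -> R) : sublin q ->
  (forall q' : X -> R, sublin q' -> (forall x, q' x <= q x) -> forall x, q x <= q' x) ->
  forall y, q (- y) = - q y.
Proof.
move=> sq qmin y.
have [sq' q'q hy] := shift_sublin y sq.
apply/eqP; rewrite eq_le; apply/andP; split; last first.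
  by rewrite lerNl; exact: sublin_neg.
exact: le_trans (qmin _ sq' q'q (- y)) hy.
Qed.

Lemma hahn_banach0 : exists f : X -> R,
  (forall a u v, f (a *: u + v) = a * f u + f v) /\ forall x, f x <= p x.
Proof.
have [| | | |t tmin] := @Zorn Tq Rq.
- by move=> t; apply/asboolP => x.
- move=> r s t /asboolP h1 /asboolP h2; apply/asboolP => x; exact: le_trans (h2 x) (h1 x).
- move=> [s hs] [t ht] /asboolP /= h1 /asboolP /= h2.
  have e : s = t by apply/funext => x; apply/eqP; rewrite eq_le h1 h2.
  by subst t; congr exist; exact: Prop_irrelevance.
- exact: chain_lb.
set q := sval t.
have sq : sublin q := proj1 (svalP t).
have qmin : forall q' : X -> R, sublin q' -> (forall x, q' x <= q x) -> forall x, q x <= q' x.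
  move=> q' sq' h x.
  have hp : forall x, q' x <= p x by move=> z; exact: le_trans (h z) (proj2 (svalP t) z).
  have := tmin (exist _ q' (conj sq' hp)).
  have Rr : Rq t (exist _ q' (conj sq' hp)) by apply/asboolP.
  by move=> /(_ Rr) e; rewrite /q -e.
have qN := minimal_linear sq qmin.
exists q; split; last exact: (proj2 (svalP t)).
have qadd u v : q (u + v) = q u + q v.
  apply/eqP; rewrite eq_le sq.1 /=.
  have := sq.1 (u + v) (- v); rewrite addrK qN.
  by rewrite lerBrDr.
move=> a u v; rewrite qadd; congr (_ + _).
have [a0|a0] := leP 0 a; first exact: sublin_hom.
have -> : a *: u = - ((- a) *: u) by rewrite scaleNr opprK.
by rewrite qN sublin_hom ?oppr_ge0 ?ltW // mulNr opprK.
Qed.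

End Zorn_HB.
End HBsec.
Section Norming.
Variables (R : realType) (X : normedModType R).

Lemma norm_sublin : sublin (fun x : X => `|x|).
Proof.
split; first by move=> x y; exact: ler_normD.
by move=> a x a0; rewrite normrZ ger0_norm.
Qed.

Lemma lin0 (f : X -> R) : (forall a u v, f (a *: u + v) = a * f u + f v) -> f 0 = 0.
Proof.
move=> fl; have := fl 1 0 0; rewrite scale1r addr0 mul1r => h.
lra.
Qed.

Lemma linN (f : X -> R) : (forall a u v, f (a *: u + v) = a * f u + f v) ->
  forall x, f (- x) = - f x.
Proof.
move=> fl x; have := fl (-1) x 0; rewrite addr0 lin0 // addr0 scaleN1r => ->.
by rewrite mulN1r.
Qed.

Lemma linB (f : X -> R) : (forall a u v, f (a *: u + v) = a * f u + f v) ->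
  forall x y, f (x - y) = f x - f y.
Proof.
move=> fl x y; have := fl (-1) y x; rewrite scaleN1r mulN1r addrC => ->.
by rewrite addrC.
Qed.

Lemma lin_cont (f : X -> R) : (forall a u v, f (a *: u + v) = a * f u + f v) ->
  (forall x, `|f x| <= `|x|) -> continuous f.
Proof.
move=> fl fb x; apply/cvgrPdist_lt => e e0.
near=> y.
rewrite -linB //; apply: le_lt_trans (fb _) _.
near: y; apply: cvgr_dist_lt => //.
Unshelve. all: by end_near.
Qed.

Lemma norming (v : X) : exists f : X -> R,
  [/\ (forall a u v, f (a *: u + v) = a * f u + f v), f v = `|v| &
      forall x, `|f x| <= `|x|].
Proof.
have [hs hle hv] := shift_sublin v norm_sublin.
have [f [fl fp]] := hahn_banach0 hs.
exists f; split => //.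
  apply/eqP; rewrite eq_le; apply/andP; split.
    exact: le_trans (fp v) (hle v).
  by have := le_trans (fp (- v)) hv; rewrite linN // lerN2.
move=> x; rewrite ler_norml; apply/andP; split.
  by rewrite lerNl -linN // -(normrN x); exact: le_trans (fp _) (hle _).
exact: le_trans (fp _) (hle _).
Qed.

End Norming.

Definition wgt (R : realType) (n : nat) : R := (3%:R ^+ n.+1)^-1.

Lemma wgt_gt0 (R : realType) n : 0 < wgt R n.
Proof. by rewrite /wgt invr_gt0 exprn_gt0. Qed.

Lemma wgtS (R : realType) n : wgt R n.+1 = wgt R n / 3%:R.
Proof. by rewrite /wgt exprS invfM mulrC. Qed.

Lemma wgt_small (R : realType) n : wgt R n <= (n.+1%:R)^-1.
Proof.
rewrite /wgt lef_pV2 ?posrE ?exprn_gt0 ?ltr0n //.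
elim: n => [|n IH]; first by rewrite expr1 ler_nat.
have -> : (n.+2%:R : R) = n.+1%:R + 1 by rewrite natr1.
move: IH; rewrite (exprS _ n.+1); have : 1 <= (n.+1%:R : R) by rewrite ler1n.
lra.
Qed.

Lemma small_zero (R : realType) (d K : R) : 0 <= K ->
  (forall m, `|d| <= K * wgt R m) -> d = 0.
Proof.
move=> K0 h; apply/eqP; rewrite -normr_eq0; apply/negPn/negP => d0.
have dp : 0 < `|d| by rewrite lt_neqAle eq_sym d0 normr_ge0.
set m := Num.bound (K / `|d|).
have hm : K / `|d| < m%:R by apply: archi_boundP; rewrite divr_ge0.
have := h m; have := wgt_small R m.
have m1 : (m%:R : R) <= m.+1%:R by rewrite ler_nat.
have hm' : K < m.+1%:R * `|d|.
  by rewrite -ltr_pdivrMr //; apply: lt_le_trans hm m1.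
move=> w1 w2.
have mp : (0 : R) < m.+1%:R by rewrite ltr0n.
have h1 : `|d| <= K / m.+1%:R := le_trans w2 (ler_wpM2l K0 w1).
rewrite ler_pdivlMr // in h1.
rewrite mulrC in hm'; lra.
Qed.

Section Hump.
Variables (R : realType) (X : normedModType R) (c : nat -> X) (fs : nat -> X -> R).
Hypothesis hl : forall n a u v, fs n (a *: u + v) = a * fs n u + fs n v.
Hypothesis hb : forall n x, `|fs n x| <= `|x|.
Hypothesis hc : forall n, fs n (c n) = `|c n|.

Fixpoint ghump (n : nat) : X -> R :=
  match n with
  | 0 => fun _ => 0
  | m.+1 => fun x => ghump m x + (if 0 <= ghump m (c m) then 1 else -1) * wgt R m * fs m x
  end.

Lemma ghump_lin n a u v : ghump n (a *: u + v) = a * ghump n u + ghump n v.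
Proof.
elim: n => [|n IH] /=; first by rewrite mulr0 addr0.
rewrite IH hl; set s := (if _ then _ else _); ring.
Qed.

Lemma ghump_diff x n m : (n <= m)%N ->
  `|ghump m x - ghump n x| <= 3%:R / 2%:R * (wgt R n - wgt R m) * `|x|.
Proof.
move=> /subnK <-; elim: (m - n)%N => [|k IH].
  by rewrite add0n subrr normr0 subrr mulr0 mul0r.
rewrite addSn /=.
have e : ghump (k + n) x + (if 0 <= ghump (k + n) (c (k + n)) then 1 else -1) *
   wgt R (k + n) * fs (k + n) x - ghump n x =
   (ghump (k + n) x - ghump n x) + (if 0 <= ghump (k + n) (c (k + n)) then 1 else -1) *
   wgt R (k + n) * fs (k + n) x by ring.
rewrite e; apply: le_trans (ler_normD _ _) _.
have h2 : `|(if 0 <= ghump (k + n) (c (k + n)) then 1 else -1) * wgt R (k + n) * fs (k + n) x|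
   <= wgt R (k + n) * `|x|.
  rewrite !normrM; case: ifP => _; rewrite ?normrN normr1 mul1r;
  (rewrite (ger0_norm (ltW (wgt_gt0 _ _))); apply: ler_wpM2l; [exact: ltW (wgt_gt0 _ _)| exact: hb]).
have := wgtS R (k + n); have := wgt_gt0 R (k + n); have := normr_ge0 x.
move: IH h2; set A := `|_ - _|; set B := `|_ * _ * _|.
set w0 := wgt R n; set w1 := wgt R (k + n); set w2 := wgt R (k + n).+1; set nx := `|x|.
move=> IH h2 nx0 w1p ->.
nra.
Qed.


Lemma ghump_sign n : wgt R n * `|c n| <= `|ghump n.+1 (c n)|.
Proof.
rewrite /= hc; have := wgt_gt0 R n; have := normr_ge0 (c n).
set g := ghump n (c n); set w := wgt R n; set y := `|c n|.
move=> y0 w0; have wy : 0 <= w * y by rewrite mulr_ge0 // ltW.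
case: ifP => hg; rewrite ler_normr; apply/orP.
  by left; lra.
by right; move: hg => /negbT; rewrite -ltNge => hg; lra.
Qed.

Lemma wgt_lt (eps K : R) : 0 < eps -> 0 <= K -> exists N, K * wgt R N < eps.
Proof.
move=> e0 K0; set N := Num.bound (K / eps).
have hN : K / eps < N%:R by apply: archi_boundP; rewrite divr_ge0 // ltW.
exists N.
have mp : (0 : R) < N.+1%:R by rewrite ltr0n.
apply: le_lt_trans (ler_wpM2l K0 (wgt_small R N)) _.
rewrite ltr_pdivrMr //; rewrite ltr_pdivrMr // in hN.
have h2 : (N%:R : R) * eps <= N.+1%:R * eps by rewrite ler_pM2r // ler_nat.
rewrite mulrC; exact: lt_le_trans hN h2.
Qed.

Lemma ghump_cvg x : cvgn (fun n => ghump n x).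
Proof.
apply: cauchy_cvg; apply: cauchy_exP => eps e0.
have [N hN] := wgt_lt (e0) (mulr_ge0 (ler0n _ 3%N) (normr_ge0 x)).
exists (ghump N x); rewrite /fmap /=; near=> n.
rewrite /ball /= distrC; apply: le_lt_trans (ghump_diff x _) _.
  by near: n; exists N.
apply: le_lt_trans hN.
have := wgt_gt0 R n; have := normr_ge0 x; have := wgt_gt0 R N.
nra.
Unshelve. all: by end_near.
Qed.


Definition hf (x : X) : R := lim ((fun n => ghump n x) @ \oo).

Lemma hf_bound x m : `|hf x - ghump m x| <= 3%:R / 2%:R * wgt R m * `|x|.
Proof.
apply/ler_addgt0Pr => e e0.
have hc' := @ghump_cvg x.
near \oo => n.
have h1 : `|hf x - ghump n x| < e.
  by near: n; move: hc' => /cvgr_dist_lt /(_ e e0).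
have h2 := ghump_diff x (_ : (m <= n)%N).
have mn : (m <= n)%N by near: n; exists m.
move: (h2 mn) => {}h2.
have := ler_distD (ghump n x) (hf x) (ghump m x).
have : 0 <= wgt R n * `|x| by rewrite mulr_ge0 // ltW // wgt_gt0.
nra.
Unshelve. all: by end_near.
Qed.

Lemma hf_lin a u v : hf (a *: u + v) = a * hf u + hf v.
Proof.
apply/eqP; rewrite -subr_eq0; apply/eqP.
apply: (@small_zero _ _ (3%:R / 2%:R * (`|a *: u + v| + `|a| * `|u| + `|v|))).
  by rewrite mulr_ge0 // !addr_ge0 // mulr_ge0.
move=> m.
have e1 : hf (a *: u + v) - (a * hf u + hf v) =
  (hf (a *: u + v) - ghump m (a *: u + v)) - a * (hf u - ghump m u) - (hf v - ghump m v).
  by rewrite ghump_lin; ring.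
rewrite e1.
have h1 := hf_bound (a *: u + v) m.
have h2 := hf_bound u m.
have h3 := hf_bound v m.
have h2' : `|a * (hf u - ghump m u)| <= `|a| * (3%:R / 2%:R * wgt R m * `|u|).
  by rewrite normrM ler_wpM2l.
apply: le_trans (ler_normB _ _) _.
apply: le_trans (lerD (ler_normB _ _) (lexx _)) _.
have := wgt_gt0 R m.
move: h1 h2' h3.
set A := `|_ - _|; set B := `|_ * _|; set Cc := `|hf v - _|.
move=> h1 h2' h3 w0.
have -> : 3%:R / 2%:R * (`|a *: u + v| + `|a| * `|u| + `|v|) * wgt R m =
  3%:R / 2%:R * wgt R m * `|a *: u + v| + `|a| * (3%:R / 2%:R * wgt R m * `|u|) +
  3%:R / 2%:R * wgt R m * `|v| by ring.
lra.
Qed.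

Lemma hf_norm x : `|hf x| <= `|x|.
Proof.
have := hf_bound x 0; rewrite /= subr0 /wgt expr1.
have := normr_ge0 x.
have -> : 3%:R / 2%:R * (3%:R : R)^-1 = 2%:R^-1.
  by rewrite mulrC mulrA mulVf ?pnatr_eq0 // mul1r.
lra.
Qed.

Lemma hf_sign n : wgt R n * `|c n| / 2%:R <= `|hf (c n)|.
Proof.
have h1 := ghump_sign n.
have h2 := hf_bound (c n) n.+1.
rewrite wgtS in h2.
have := ler_distD (hf (c n)) (ghump n.+1 (c n)) 0.
rewrite !subr0 (distrC (ghump _ _)).
lra.
Qed.

End Hump.

Lemma weak_nbhs (R : realType) (X : normedModType R) (i : dual_index X) (z : X) e :
  0 < e -> @nbhs (weak_space X) (weak_space X) z [set x | `|sval i z - sval i x| < e].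
Proof.
move=> e0.
have h := @cvg_sup X (dual_index X) (fun i : dual_index X =>
    Topological.on (initial_topology (proj1_sig i))) (@nbhs (weak_space X) (weak_space X) z) z.
have := (h _).1 (@cvg_id _ _) i; apply.
have hc := @initial_continuous X R (proj1_sig i) z.
by move: hc => /cvgr_dist_lt /(_ e e0).
Qed.

Lemma wcluster (R : realType) (X : normedModType R) (C : set X) (A : nat -> set X) :
  weakly_compact C -> (forall n, A n `<=` C) -> (forall n, A n !=set0) ->
  (forall n m, (n <= m)%N -> A m `<=` A n) ->
  exists2 z, C z & forall n (i : dual_index X) e, 0 < e ->
    exists u, A n u /\ `|sval i z - sval i u| < e.
Proof.
move=> wc AC An Adec.
pose F : set_system (weak_space X) := filter_from [set: nat] A.
have FF : Filter F.
  apply: filter_from_filter; first by exists 0%N.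
  move=> i j _ _; exists (maxn i j) => //.
  by move=> x Ax; split; apply: (Adec _ (maxn i j)) => //; rewrite ?leq_maxl ?leq_maxr.
have PF : ProperFilter F by apply: filter_from_proper => i _; exact: An.
have FC : F C by exists 0%N.
have [z [Cz cz]] := wc F PF FC.
exists z => // n i e e0.
have [u [Au Bu]] := cz (A n) _ (ex_intro2 _ _ n I (fun x h => h)) (weak_nbhs i z e0).
by exists u.
Qed.

Section WC.
Variables (R : realType) (X : normedModType R).

Definition dual_of (f : X -> R) (fl : forall a u v, f (a *: u + v) = a * f u + f v)
  (fb : forall x, `|f x| <= `|x|) : dual_index X :=
  exist _ f (conj fl (lin_cont fl fb)).

Lemma inv_small (e : R) : 0 < e -> exists n, (n.+1%:R)^-1 < e.
Proof.
move=> e0; set n := Num.bound (e^-1).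
have hn : e^-1 < n%:R by apply: archi_boundP; rewrite invr_ge0 ltW.
exists n.
have mp : (0 : R) < n.+1%:R by rewrite ltr0n.
rewrite -div1r ltr_pdivrMr //.
have h2 : (n%:R : R) <= n.+1%:R by rewrite ler_nat.
have : e^-1 < n.+1%:R := lt_le_trans hn h2.
by rewrite -div1r ltr_pdivrMr // mulrC.
Qed.

Lemma wc_fbounded (C : set X) : weakly_compact C ->
  forall i : dual_index X, exists M, forall x, C x -> `|sval i x| <= M.
Proof.
move=> wc i; apply/not_existsP => hn.
have hA : forall n, exists x, C x /\ n%:R <= `|sval i x|.
  move=> n; have := hn n%:R; move=> /existsNP [x /not_implyP [Cx /negP]].
  by rewrite -ltNge => h; exists x; split => //; exact: ltW.
pose A n := [set x | C x /\ n%:R <= `|sval i x|].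
have Adec : forall n m, (n <= m)%N -> A m `<=` A n.
  move=> n m nm x [Cx hx]; split => //; apply: le_trans hx; by rewrite ler_nat.
have [z Cz cz] := @wcluster R X C A wc (fun n x h => h.1) hA Adec.
set n := Num.bound (`|sval i z| + 1).
have hnb : `|sval i z| + 1 < n%:R by apply: archi_boundP; rewrite addr_ge0.
have [u [[Cu hu] hzu]] := cz n i 1 ltr01.
have := ler_distD (sval i z) (sval i u) 0; rewrite !subr0 (distrC (sval i u)).
lra.
Qed.



Lemma wc_bounded (C : set X) : weakly_compact C -> exists M, forall x, C x -> `|x| <= M.
Proof.
move=> wc; apply/not_existsP => hn.
have hA : forall n : nat, exists x, C x /\ 2%:R * n.+1%:R / wgt R n < `|x|.
  move=> n; have := hn (2%:R * n.+1%:R / wgt R n).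
  move=> /existsNP [x /not_implyP [Cx /negP]]; rewrite -ltNge => h; by exists x.
have [c hc] := choice hA.
have hF : forall n, exists f : X -> R, [/\ (forall a u v, f (a *: u + v) = a * f u + f v),
   f (c n) = `|c n| & forall x, `|f x| <= `|x|] := fun n => norming (c n).
have [fs hfs] := choice hF.
have hl : forall n a u v, fs n (a *: u + v) = a * fs n u + fs n v by move=> n; case: (hfs n).
have hb : forall n x, `|fs n x| <= `|x| by move=> n; case: (hfs n).
have hcn : forall n, fs n (c n) = `|c n| by move=> n; case: (hfs n).
pose i := dual_of (hf_lin c hl hb) (hf_norm c hb).
have [M hM] := wc_fbounded wc i.
set n := Num.bound `|M|.
have hnb : `|M| < n%:R by apply: archi_boundP.
have h1 := hf_sign hb hcn n.
have h2 : `|hf c fs (c n)| <= M := hM _ (hc n).1.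
have h3 := (hc n).2.
rewrite ltr_pdivrMr ?wgt_gt0 // in h3.
have h4 : (n%:R : R) <= n.+1%:R by rewrite ler_nat.
have h5 : M <= `|M| := ler_norm M.
lra.
Qed.

Lemma wclosed_ball (A : set X) z c s :
  (forall (i : dual_index X) e, 0 < e -> exists u, A u /\ `|sval i z - sval i u| < e) ->
  (forall u, A u -> `|u - c| <= s) -> `|z - c| <= s.
Proof.
move=> cz hA; rewrite leNgt; apply/negP => hlt.
have [f [fl fv fb]] := norming (z - c).
have e0 : 0 < `|z - c| - s by rewrite subr_gt0.
have [u [Au hu]] := cz (dual_of fl fb) _ e0.
rewrite /= in hu.
have h1 := hA u Au.
have h2 := fb (u - c).
rewrite (linB fl) in fv; rewrite (linB fl) in h2.
have h3 := ler_norm (f u - f c).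
have h4 := ler_norm (f z - f u).
lra.
Qed.

End WC.

Section Rad.
Variables (R : realType) (X : normedModType R) (C : set X) (T : X -> X) (M : R).
Hypothesis TC : forall x, C x -> C (T x).
Hypothesis Cb : forall x, C x -> `|x| <= M.

Definition rr (x : X) : R := fine (orb_radius x (orbitT T x)).

Lemma iterC x k : C x -> C (iter k T x).
Proof. by move=> Cx; elim: k => //= k; exact: TC. Qed.

Lemma iter_fix x k : T x = x -> iter k T x = x.
Proof. by move=> Tx; elim: k => //= k ->. Qed.

Lemma rad_ge x k : ((`|x - iter k T x|)%:E <= orb_radius x (orbitT T x))%E.
Proof. by apply: ereal_sup_ubound; exists (iter k T x) => //; exists k. Qed.

Lemma rad_le x b : (forall k, ((`|x - iter k T x|)%:E <= b)%E) ->
  (orb_radius x (orbitT T x) <= b)%E.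
Proof. by move=> h; apply: ge_ereal_sup => _ [y [k _ <-] <-]; exact: h. Qed.

Lemma rad_fin x : C x -> orb_radius x (orbitT T x) = (rr x)%:E.
Proof.
move=> Cx; rewrite /rr fineK //.
have h0 : (0 <= orb_radius x (orbitT T x))%E.
  by apply: le_trans (rad_ge x 0); rewrite lee_fin normr_ge0.
have h1 : (orb_radius x (orbitT T x) <= (M + M)%:E)%E.
  apply: rad_le => k; rewrite lee_fin.
  apply: le_trans (ler_normB _ _) _; apply: lerD; [exact: Cb|exact/Cb/iterC].
rewrite ge0_fin_numE //; exact: le_lt_trans h1 (ltry _).
Qed.

Lemma rr_ge x k : C x -> `|x - iter k T x| <= rr x.
Proof. by move=> Cx; have := rad_ge x k; rewrite rad_fin // lee_fin. Qed.

Lemma rr_le x b : C x -> (forall k, `|x - iter k T x| <= b) -> rr x <= b.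
Proof.
move=> Cx h; have : (orb_radius x (orbitT T x) <= b%:E)%E.
  by apply: rad_le => k; rewrite lee_fin.
by rewrite rad_fin // lee_fin.
Qed.

Lemma rr_ge0 x : C x -> 0 <= rr x.
Proof. by move=> Cx; apply: le_trans (rr_ge 0 Cx); rewrite normr_ge0. Qed.

Lemma rr_kannan x y : orbitally_kannan C T -> C x -> C y ->
  `|T x - T y| <= 2%:R^-1 * (rr x + rr y).
Proof. by move=> hK Cx Cy; have := hK x y Cx Cy; rewrite !rad_fin // -EFinD -EFinM lee_fin. Qed.

Lemma rr_dim x : diminishes_orbit_radius C T -> C x -> rr (T x) <= rr x.
Proof. by move=> hD Cx; have := hD x Cx; rewrite !rad_fin ?lee_fin //; exact: TC. Qed.

Lemma rr_iter x k : diminishes_orbit_radius C T -> C x -> rr (iter k T x) <= rr x.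
Proof.
move=> hD Cx; elim: k => //= k IH.
exact: le_trans (rr_dim hD (iterC k Cx)) IH.
Qed.

End Rad.

Unset Implicit Arguments.

Theorem theorem4p4 (R : realType) (X : completeNormedModType R) (C : set X)
  (T : X -> X) :
  C !=set0 -> weakly_compact C -> convex_in C ->
  (forall x, C x -> C (T x)) ->
  orbitally_kannan C T -> diminishes_orbit_radius C T ->
  [/\ (has_unique_fixed_point C T <->
        ereal_inf [set orb_radius x (orbitT T x) | x in C] = 0%E),
      (ereal_inf [set orb_radius x (orbitT T x) | x in C] = 0%E <->
        (forall x, C x -> (0 < orb_radius x (orbitT T x))%E ->
           exists2 y, C y & (orb_radius y (orbitT T y) < orb_radius x (orbitT T x))%E)) &
      (has_unique_fixed_point C T <->
        (forall x, C x -> (0 < orb_radius x (orbitT T x))%E ->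
           exists2 y, C y & (orb_radius y (orbitT T y) < orb_radius x (orbitT T x))%E))].
Proof.
move=> Cne wc _ TC hK hD.
have [M Cb] := wc_bounded wc.
set S := [set orb_radius x (orbitT T x) | x in C].
set P3 := (forall x, C x -> (0 < orb_radius x (orbitT T x))%E ->
           exists2 y, C y & (orb_radius y (orbitT T y) < orb_radius x (orbitT T x))%E).
have rge := rr_ge TC Cb; have rle := rr_le TC Cb; have rfin := rad_fin TC Cb.
have rge0 := rr_ge0 TC Cb.
have fixrr x : C x -> T x = x -> rr T x = 0.
  move=> Cx Tx; apply/eqP; rewrite eq_le rge0 // andbT.
  by apply: rle => // k; rewrite iter_fix // subrr normr0.
have S_ge0 : forall y, S y -> (0 <= y)%E.
  by move=> _ [x Cx <-]; rewrite rfin // lee_fin rge0.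
have P12 : has_unique_fixed_point C T -> ereal_inf S = 0%E.
  move=> [x [[Cx Tx] _]]; apply/eqP; rewrite eq_le; apply/andP; split.
    have <- : orb_radius x (orbitT T x) = 0%E by rewrite rfin // fixrr.
    by apply: ereal_inf_lbound; exists x.
  by apply: le_ereal_inf_tmp => y Sy; exact: S_ge0.
have P23 : ereal_inf S = 0%E -> P3.
  move=> h0 x Cx rpos.
  have : (ereal_inf S < orb_radius x (orbitT T x))%E by rewrite h0.
  by move/ereal_inf_lt => [_ [y Cy <-] lt]; exists y.
have P31 : P3 -> has_unique_fixed_point C T.
  move=> h3.
  pose Sr := [set rr T x | x in C].
  have Srne : Sr !=set0 by case: Cne => x Cx; exists (rr T x), x.
  have Srlb : forall y, Sr y -> 0 <= y by move=> _ [x Cx <-]; exact: rge0.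
  set rho := inf Sr.
  have rho_le : forall x, C x -> rho <= rr T x.
    by move=> x Cx; apply: ge_inf; [exists 0; exact: Srlb | exists x].
  have rho_ge0 : 0 <= rho := lb_le_inf Srne Srlb.
  have rho_adh : forall e, 0 < e -> exists2 y, C y & rr T y < rho + e.
    move=> e e0; have : inf Sr < rho + e by rewrite ltrDl.
    by move/(inf_lt Srne) => [_ [y Cy <-] lt]; exists y.
  pose A n := [set u | C u /\ forall w, C w ->
     `|u - T w| <= 2%:R^-1 * (rho + (n.+1%:R)^-1 + rr T w)].
  have AC : forall n, A n `<=` C by move=> n u [].
  have Ane : forall n, A n !=set0.
    move=> n; have ip : 0 < (n.+1%:R : R)^-1 by rewrite invr_gt0 ltr0n.
    have [y Cy hy] := rho_adh _ ip.
    exists (T y); split; first exact: TC.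
    move=> w Cw; apply: le_trans (rr_kannan TC Cb hK Cy Cw) _.
    rewrite ler_pM2l ?invr_gt0 ?ltr0n // lerD2r; exact: ltW.
  have Adec : forall n m, (n <= m)%N -> A m `<=` A n.
    move=> n m nm u [Cu hu]; split => // w Cw; apply: le_trans (hu w Cw) _.
    rewrite ler_pM2l ?invr_gt0 ?ltr0n // lerD2r lerD2l.
    by rewrite lef_pV2 ?posrE ?ltr0n // ler_nat.
  have [z Cz cz] := wcluster wc AC Ane Adec.
  have zb : forall n w, C w -> `|z - T w| <= 2%:R^-1 * (rho + (n.+1%:R)^-1 + rr T w).
    move=> n w Cw; apply: (@wclosed_ball _ _ (A n)); first exact: cz n.
    by move=> u [_ hu]; exact: hu w Cw.
  have zr : rr T z <= rho.
    apply/ler_addgt0Pr => e e0; have [n hn] := inv_small e0.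
    have : rr T z <= 2%:R^-1 * (rho + (n.+1%:R)^-1 + rr T z).
      apply: rle => // -[|k].
        rewrite /= subrr normr0 mulr_ge0 // ?invr_ge0 ?ler0n // !addr_ge0 // ?invr_ge0 ?ler0n //.
        exact: rge0.
      rewrite iterS; apply: le_trans (zb n _ (iterC TC k Cz)) _.
      rewrite ler_pM2l ?invr_gt0 ?ltr0n // lerD2l.
      have := @rr_iter _ _ C T M TC Cb z k hD Cz. exact.
    set q := (n.+1%:R : R)^-1 in hn *; lra.
  have rz0 : rr T z = 0.
    apply/eqP; rewrite eq_le rge0 // andbT; rewrite leNgt; apply/negP => pos.
    have zpos : (0 < orb_radius z (orbitT T z))%E by rewrite rfin // lte_fin.
    have [y Cy lt] := h3 z Cz zpos.
    rewrite !rfin // lte_fin in lt; have := rho_le y Cy; lra.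
  have Tz : T z = z.
    have := rge z 1%N Cz; rewrite rz0 /= => h.
    by apply/eqP; rewrite eq_sym -subr_eq0 -normr_eq0 eq_le h normr_ge0.
  exists z; split; first by split.
  move=> y [Cy Ty].
  have := rr_kannan TC Cb hK Cz Cy; rewrite Tz Ty rz0 fixrr // addr0 mulr0 => h.
  by apply/eqP; rewrite -subr_eq0 -normr_eq0 eq_le h normr_ge0.
split; split.
- exact: P12.
- by move=> h; exact: P31 (P23 h).
- exact: P23.
- by move=> h; exact: P12 (P31 h).
- by move=> h; exact: P23 (P12 h).
- exact: P31.
Qed.
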